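(* Let $N$ be a semi-directed network on leaf set $X$ with $|X|\ge4$ and let $\{x,y\}\subseteq X$. Then $$\widetilde d_N(x,y)=\frac1{\mu(N)}\sum_{T\in\mathcal T(N)}\mu(T,N)\cdot d_T(x,y).$$
   Context: A (binary) rooted phylogenetic network on $X$ is a rooted DAG whose root has in-degree 0, out-degree 2, whose leaves (in-degree 1, out-degree 0) are bijectively labeled by $X$, and whose other nodes have (in,out)-degree $(1,2)$ or $(2,1)$ (hybrid nodes), the root being the least stable ancestor of $X$. Edges into hybrid nodes are hybrid edges. A semi-directed network is obtained by undirecting all non-hybrid edges and suppressing the root. A phylogenetic tree is a semi-directed network without hybrid nodes. $T$ is displayed by $N$ if obtained by deleting exactly one hybrid edge per hybrid node, then repeatedly deleting unlabeled leaves and suppressing degree-2 nodes; $\mathcal T(N)$ is the set of displayed trees, $\mu(T,N)$ the number of choices of deleted hybrid edges yielding $T$, and $\mu(N)=\sum_T\mu(T,N)$. For $Y\subseteq X$, $N|_Y$ is the union of all up-down paths between leaves of $Y$ (paths that from one end first go only against edge directions then only along them, undirected edges usable both ways), with degree-2 nodes suppressed; $N|_{xyzw}=N|_{\{x,y,z,w\}}$ (for trees, the induced subtree). For a quartet tree $T$ on $\{x,y,z,w\}$, $\rho_{xy}(T)=0$ if $T$ has split $\{x,y\}|\{z,w\}$, else $1$; for a network $M$ on four leaves, $\widetilde\rho_{xy}(M)=\frac1{\mu(M)}\sum_{T\in\mathcal T(M)}\mu(T,M)\rho_{xy}(T)$. With $n=|X|$: the quartet metric of a tree $T$ on $X$ is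 $d_T(x,y)=\sum_{\{z,w\}}2\rho_{xy}(T|_{xyzw})+2n-4$ and the displayed quartet metric of $N$ is $\widetilde d_N(x,y)=\sum_{\{z,w\}}2\widetilde\rho_{xy}(N|_{xyzw})+2n-4$ for $x\ne y$ (sums over 2-element subsets $\{z,w\}\subseteq X\setminus\{x,y\}$), with $d_T(x,x)=\widetilde d_N(x,x)=0$. *)

(* Defs.v *)
From HB Require Import structures.
From mathcomp Require Import all_boot all_order all_algebra.
From mathcomp Require Import boolp.
Set Implicit Arguments. Unset Strict Implicit. Unset Printing Implicit Defensive.
Import Order.TTheory GRing.Theory Num.Theory.
Local Open Scope ring_scope.

(* A rooted binary phylogenetic network on leaf set X is given by a finite
   node type V, a directed edge relation E, a leaf labelling lab : X -> V
   and a root r.  The semi-directed network N obtained from it (non-hybrid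
   edges undirected, root suppressed) is handled directly on this data: the
   root only ever occurs as an interior vertex (of degree 2) of paths, and
   only hybrid edges (edges into hybrid nodes) carry a direction.            *)

Section Defs.
Variables (X V : finType) (E : rel V) (lab : X -> V) (r : V).

Definition indeg (B : rel V) (v : V) : nat := #|[set u | B u v]|.
Definition outdeg (B : rel V) (v : V) : nat := #|[set w | B v w]|.

Definition hyb (B : rel V) (v : V) : bool := indeg B v == 2%N.

Definition is_rooted_network : Prop :=
  [/\
      (forall u v, E u v -> ~~ connect E v u),
      indeg E r = 0%N /\ outdeg E r = 2%N,
      injective lab /\
      (forall v, (v \in codom lab) = (indeg E v == 1%N) && (outdeg E v == 0%N)),
      (forall v, v != r -> v \notin codom lab ->
         ((indeg E v == 1%N) && (outdeg E v == 2%N)) ||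
         ((indeg E v == 2%N) && (outdeg E v == 1%N)))
    & (* the root is the least stable ancestor of X: no node other than the
         root lies on all directed root-to-leaf paths *)
      (forall v, v != r ->
         exists x, connect [rel a b | E a b && (b != v)] r (lab x))].

Definition steps (p : seq V) : seq (V * V) := zip p (behead p).

Definition along (e : V * V) : bool := E e.1 e.2 && hyb E e.2.
Definition against (e : V * V) : bool := E e.2 e.1 && hyb E e.1.

(* up-down path of the semi-directed network between two leaves of Y:
   first only against edge directions, then only along them *)
Definition updown_path (Y : {set X}) (p : seq V) : Prop :=
  [/\ uniq p, (1 < size p)%N,
      (head r p \in lab @: Y) && (last r p \in lab @: Y),
      all (fun e => E e.1 e.2 || E e.2 e.1) (steps p)
    & forall i j, (i < j)%N -> (j < size (steps p))%N ->
        ~~ (along (nth (r, r) (steps p) i) && against (nth (r, r) (steps p) j))].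

(* edge relation of N|_Y : edges lying on some up-down path between leaves of Y *)
Definition resE (Y : {set X}) : rel V := fun u v =>
  `[< E u v /\ exists p, updown_path Y p /\
        ((u, v) \in steps p \/ (v, u) \in steps p) >].

(* choices of one deleted hybrid edge per hybrid node: f h is the parent of h
   whose edge into h is deleted (f v = v for non-hybrid v) *)
Definition choices (B : rel V) : {set {ffun V -> V}} :=
  [set f : {ffun V -> V} | [forall v, if hyb B v then B (f v) v else f v == v]].

Definition mu (B : rel V) : nat := #|choices B|.

(* the (undirected) graph of the displayed tree for the choice f, before
   deleting unlabelled leaves and suppressing degree-2 nodes *)
Definition kept (B : rel V) (f : {ffun V -> V}) : rel V := fun u v =>
  B u v && ~~ (hyb B v && (f v == u)).
Definition adj (B : rel V) (f : {ffun V -> V}) : rel V := fun u v =>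
  kept B f u v || kept B f v u.
Definition cut (B : rel V) (f : {ffun V -> V}) (a b : V) : rel V := fun u v =>
  adj B f u v && ~~ (((u == a) && (v == b)) || ((u == b) && (v == a))).

(* the quartet restriction of the displayed tree to x,y and S = {z,w} has the
   split {x,y}|{z,w}: some edge separates {x,y} from {z,w} *)
Definition has_split (B : rel V) (f : {ffun V -> V}) (x y : X) (S : {set X}) : bool :=
  [exists a, exists b,
    [&& kept B f a b,
        connect (cut B f a b) (lab x) (lab y),
        [forall z in S, forall w in S, connect (cut B f a b) (lab z) (lab w)] &
        [forall z in S, ~~ connect (cut B f a b) (lab x) (lab z)]]].

Definition rho (B : rel V) (f : {ffun V -> V}) (x y : X) (S : {set X}) : rat :=
  if has_split B f x y S then 0 else 1.

Definition pairs_off (x y : X) (S : {set X}) : bool :=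
  [&& #|S| == 2%N, x \notin S & y \notin S].

Definition dT (f : {ffun V -> V}) (x y : X) : rat :=
  if x == y then 0 else
  (\sum_(S : {set X} | pairs_off x y S) (2 * rho E f x y S))
  + ((2 * #|X|)%:R - 4).

Definition rho_tilde (x y : X) (S : {set X}) : rat :=
  let B := resE (x |: (y |: S)) in
  (mu B)%:R^-1 * (\sum_(g in choices B) rho B g x y S).

Definition dN (x y : X) : rat :=
  if x == y then 0 else
  (\sum_(S : {set X} | pairs_off x y S) (2 * rho_tilde x y S))
  + ((2 * #|X|)%:R - 4).

End Defs.

(* Main.v *)
Require Import Defs.
From HB Require Import structures.
From mathcomp Require Import all_boot all_order all_algebra.
From mathcomp Require Import boolp.
Import GRing.Theory Num.Theory.
Set Implicit Arguments. Unset Strict Implicit. Unset Printing Implicit Defensive.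

Section Graph.
Context {V : finType}.
Implicit Types (e K : rel V).

Lemma connect_ind_fwd e x (Q : V -> Prop) :
  Q x -> (forall u v, connect e x u -> e u v -> Q u -> Q v) ->
  forall y, connect e x y -> Q y.
Proof.
move=> Qx IH y /connectP [p pth ->].
elim/last_ind: p pth => [//|p z IHp].
rewrite rcons_path last_rcons => /andP [pp ez].
apply: (IH (last x p)) => //; last exact: IHp.
by apply/connectP; exists p.
Qed.

Lemma connect_between e e' x y :
  connect e x y ->
  (forall u v, connect e x u -> e u v -> connect e v y -> e' u v) ->
  connect e' x y.
Proof.
move=> /connectP [p]; elim: p x => [|z p IHp] x /=; first by move=> _ ->.
move=> /andP [exz pp] yl H.
have czy : connect e z y by apply/connectP; exists p.
apply: (connect_trans (connect1 (H x z (connect0 _ _) exz czy))).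
apply: IHp => // u v cu euv cv; apply: H => //.
exact: connect_trans (connect1 exz) cu.
Qed.

Lemma last_step e x y : connect e x y -> y != x ->
  exists2 u, connect e x u & e u y.
Proof.
move=> /connectP [p]; elim/last_ind: p => [|p z _] /=; first by move=> _ ->; rewrite eqxx.
rewrite rcons_path last_rcons => /andP [pp ez] -> _.
by exists (last x p) => //; apply/connectP; exists p.
Qed.

Definition acyc e := forall u v, e u v -> ~~ connect e v u.

Lemma acyc_antisym e u v : acyc e -> connect e u v -> connect e v u -> u = v.
Proof.
move=> ac cuv cvu; apply/eqP; apply/negPn/negP => nuv.
have nvu : v != u by rewrite eq_sym.
have [w cuw ewv] := last_step cuv nvu.
by move: (ac _ _ ewv); rewrite (connect_trans cvu cuw).
Qed.

Definition rsub K e := forall u v, K u v -> e u v.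

Lemma rsub_connect K e u v : rsub K e -> connect K u v -> connect e u v.
Proof. by move=> s; apply: connect_sub => a b /s /connect1. Qed.

Lemma acyc_sub K e : acyc e -> rsub K e -> acyc K.
Proof.
move=> ac s u v /s euv; apply/negP => /(rsub_connect s) cvu.
by move: (ac _ _ euv); rewrite cvu.
Qed.

Definition uparent K := forall u u' v, K u v -> K u' v -> u = u'.

Lemma up_step K b u v : uparent K -> connect K b v -> K u v -> v != b -> connect K b u.
Proof.
move=> up cbv kuv nvb; have [w cbw kwv] := last_step cbv nvb.
by rewrite (up _ _ _ kuv kwv).
Qed.

Lemma compar K u v s : uparent K ->
  connect K u s -> connect K v s -> connect K u v \/ connect K v u.
Proof.
move=> up cus; move: s cus; apply: connect_ind_fwd.
  by move=> cvu; right.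
move=> s' s cus' ks's IH cvs.
have [->|nvs] := eqVneq v s.
  by left; apply: (connect_trans cus' (connect1 ks's)).
by apply: IH; apply: (up_step up cvs ks's); rewrite eq_sym.
Qed.

Lemma connect_inv e (P : V -> bool) s t :
  (forall u v, e u v -> P u = P v) -> connect e s t -> P s = P t.
Proof.
move=> H; move: t; apply: connect_ind_fwd => // u v _ euv ->; exact: H.
Qed.

Definition cutK K (a b : V) : rel V := fun u v =>
  (K u v || K v u) && ~~ (((u == a) && (v == b)) || ((u == b) && (v == a))).

Lemma cutK_sym K a b : connect_sym (cutK K a b).
Proof.
apply: symmetric_from_pre => u v /connectP [p pth ->].
elim: p u pth => [|z p IHp] u /=; first by move=> _; exact: connect0.
move=> /andP [cuz pp]; apply: (connect_trans (IHp _ pp)); apply: connect1.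
move: cuz; rewrite /cutK orbC; case: (u == a); case: (u == b); case: (z == a);
  by case: (z == b).
Qed.

Lemma cut_fwd K a b s t : uparent K -> acyc K -> K a b ->
  connect (cutK K a b) s t -> connect K b s = connect K b t.
Proof.
move=> up ac kab; apply: connect_inv => u v.
have key : forall u v, K u v -> ~~ ((u == a) && (v == b)) ->
    connect K b u = connect K b v.
  move=> u' v' kuv nab; apply/idP/idP => [cbu|cbv].
    exact: connect_trans cbu (connect1 kuv).
  have [evb|nvb] := eqVneq v' b.
    by subst v'; move: nab; rewrite (up _ _ _ kuv kab) !eqxx.
  exact: up_step up cbv kuv nvb.
rewrite /cutK => /andP [/orP [kuv|kvu]].
  by rewrite negb_or => /andP [nab _]; apply: key.
rewrite negb_or => /andP [_ nba]; apply/esym; apply: key => //.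
by rewrite andbC.
Qed.

Lemma cut_bwd K a b m s t : acyc K -> K a b ->
  connect K m s -> connect K m t -> connect K b s = connect K b t ->
  connect (cutK K a b) s t.
Proof.
move=> ac kab cms cmt eqb.
have nba : ~~ K b a.
  by apply/negP => kba; move: (ac _ _ kab); rewrite connect1.
have sym := cutK_sym K a b.
case cbs : (connect K b s).
  have cbt : connect K b t by rewrite -eqb.
  have H : forall z, connect K b z -> connect (cutK K a b) b z.
    move=> z cbz; apply: (connect_between (e := K) (e' := cutK K a b) cbz) => u v cbu kuv _.
    rewrite /cutK kuv /= negb_or; apply/andP; split.
      apply/negP => /andP [/eqP eua /eqP evb]; subst u v.
      by move: (ac _ _ kab); rewrite cbu.
    apply/negP => /andP [/eqP eub /eqP eva]; subst u v.
    by rewrite kuv in nba.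
  by apply: connect_trans (H _ cbt); rewrite sym; apply: H.
have cbt : connect K b t = false by rewrite -eqb.
have H : forall z, connect K m z -> connect K b z = false ->
    connect (cutK K a b) m z.
  move=> z cmz cbz; apply: (connect_between (e := K) (e' := cutK K a b) cmz) => u v _ kuv cvz.
  rewrite /cutK kuv /= negb_or; apply/andP; split.
    apply/negP => /andP [_ /eqP evb]; subst v.
    by rewrite cvz in cbz.
  apply/negP => /andP [/eqP eub /eqP eva]; subst u v.
  by rewrite kuv in nba.
by apply: connect_trans (H _ cmt cbt); rewrite sym; apply: H.
Qed.
End Graph.

Section Abstract.
Variables (X V : finType) (lab : X -> V) (x y : X) (S Y : {set X}).

Definition hsK (K : rel V) : bool :=
  [exists a, exists b,
    [&& K a b,
        connect (cutK K a b) (lab x) (lab y),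
        [forall z in S, forall w in S, connect (cutK K a b) (lab z) (lab w)] &
        [forall z in S, ~~ connect (cutK K a b) (lab x) (lab z)]]].

Definition CondP (P : X -> bool) : bool :=
  [&& P x == P y, [forall z in S, forall w in S, P z == P w] &
      [forall z in S, P x != P z]].

Hypotheses (hx : x \in Y) (hy : y \in Y) (hS : S \subset Y).

Lemma CondP_eq P1 P2 : {in Y, P1 =1 P2} -> CondP P1 = CondP P2.
Proof.
move=> e; rewrite /CondP (e x hx) (e y hy); congr [&& _, _ & _].
  apply: eq_forallb => z; case zS : (z \in S) => //=.
  apply: eq_forallb => w; case wS : (w \in S) => //=.
  by rewrite (e z (subsetP hS _ zS)) (e w (subsetP hS _ wS)).
apply: eq_forallb => z; case zS : (z \in S) => //=.
by rewrite (e z (subsetP hS _ zS)).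
Qed.

Lemma CondP_wit P z0 : z0 \in S -> CondP P ->
  exists s0, exists s1, [/\ s0 \in Y, s1 \in Y, P s0 & ~~ P s1].
Proof.
move=> z0S /and3P [_ _ /forallP /(_ z0)]; rewrite z0S /= => nxz.
case Px : (P x); move: nxz; rewrite Px => h.
  exists x, z0; split; [done | exact: (subsetP hS) | done | by move: h; case: (P z0)].
exists z0, x; split; [exact: (subsetP hS) | done | by move: h; case: (P z0) | by rewrite Px].
Qed.

Lemma hs_char K L : uparent K -> acyc K ->
  (forall s, s \in Y -> connect K L (lab s)) ->
  hsK K = [exists a, exists b, K a b && CondP (fun s => connect K b (lab s))].
Proof.
move=> up ac HL; apply: eq_existsb => a; apply: eq_existsb => b.
case kab : (K a b) => //=.
have ceq : forall s t, s \in Y -> t \in Y ->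
    connect (cutK K a b) (lab s) (lab t) = (connect K b (lab s) == connect K b (lab t)).
  move=> s t sY tY; apply/idP/eqP.
    exact: cut_fwd.
  exact: (cut_bwd ac kab (HL _ sY) (HL _ tY)).
rewrite /CondP ceq //; congr [&& _, _ & _].
  apply: eq_forallb => z; case zS : (z \in S) => //=.
  apply: eq_forallb => w; case wS : (w \in S) => //=.
  by rewrite ceq //; exact: (subsetP hS).
apply: eq_forallb => z; case zS : (z \in S) => //=.
by rewrite ceq //; exact: (subsetP hS).
Qed.

Lemma below_L K L b s0 s1 : uparent K -> acyc K ->
  (forall s, s \in Y -> connect K L (lab s)) -> s1 \in Y -> s0 \in Y ->
  connect K b (lab s0) -> ~~ connect K b (lab s1) ->
  b != L /\ connect K L b.
Proof.
move=> up ac HL s1Y s0Y cb0 ncb1.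
have [cbL|cLb] := compar up cb0 (HL _ s0Y).
  by move: ncb1; rewrite (connect_trans cbL (HL _ s1Y)).
split => //; apply/negP => /eqP ebL; subst b.
by move: ncb1; rewrite HL.
Qed.

Variables (E K1 K2 : rel V) (L : V) (z0 : X).
Hypotheses (acE : acyc E) (sub1 : rsub K1 E) (sub2 : rsub K2 E)
  (up1 : uparent K1) (up2 : uparent K2) (z0S : z0 \in S)
  (H1 : forall s, s \in Y -> connect K1 L (lab s))
  (H2 : forall u v, v != L -> connect K1 L v ->
        (exists2 s, s \in Y & connect K1 v (lab s)) -> K1 u v -> K2 u v).

Let ac1 := acyc_sub acE sub1.
Let ac2 := acyc_sub acE sub2.

Lemma T12 p q : connect K1 p q -> connect K1 L p ->
  (exists2 s, s \in Y & connect K1 q (lab s)) -> connect K2 p q.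
Proof.
move=> cpq cLp [s sY cqs].
apply: (connect_between (e := K1) (e' := K2) cpq) => u v cpu kuv cvq.
apply: H2 => //.
- apply/negP => /eqP evL; subst v.
  by move: (ac1 kuv); rewrite (connect_trans cLp cpu).
- exact: connect_trans (connect_trans cLp cpu) (connect1 kuv).
- by exists s => //; exact: connect_trans cvq cqs.
Qed.

Lemma P0 s : s \in Y -> connect K2 L (lab s).
Proof. by move=> sY; apply: T12 => //; [exact: H1 | exists s]. Qed.



Lemma T21 b s : b != L -> connect K2 L b -> s \in Y ->
  connect K2 b (lab s) -> connect K1 b (lab s).
Proof.
move=> nbL cLb sY.
have key : forall t, connect K1 L t ->
    connect K1 t (lab s) -> connect K2 b t -> connect K1 b t.
  apply: connect_ind_fwd.
    move=> _ cbL; move: nbL; rewrite (acyc_antisym ac2 cbL cLb).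
    by rewrite eqxx.
  move=> u v cLu kuv IH cvs cbv.
  have [evb|nvb] := eqVneq v b; first by rewrite evb connect0.
  have k2 : K2 u v.
    apply: H2 => //.
    - apply/negP => /eqP evL; subst v.
      by move: (ac1 kuv); rewrite cLu.
    - exact: connect_trans cLu (connect1 kuv).
    - by exists s.
  have cbu := up_step up2 cbv k2 nvb.
  exact: connect_trans (IH (connect_trans (connect1 kuv) cvs) cbu) (connect1 kuv).
by move=> cbs; apply: key => //; exact: H1.
Qed.

Lemma Peq b s0 : b != L -> connect K1 L b -> s0 \in Y -> connect K1 b (lab s0) ->
  {in Y, (fun s => connect K1 b (lab s)) =1 (fun s => connect K2 b (lab s))}.
Proof.
move=> nbL cLb s0Y cb0.
have cLb2 : connect K2 L b by apply: T12 => //; exists s0.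
move=> s sY /=; apply/idP/idP => h.
  by apply: T12 => //; exists s.
exact: T21.
Qed.

Lemma abstract_main : hsK K1 = hsK K2.
Proof.
rewrite (hs_char up1 ac1 H1) (hs_char up2 ac2 P0).
apply/existsP/existsP => [[a /existsP [b /andP [kab cd]]]|[a /existsP [b /andP [kab cd]]]].
  have [s0 [s1 [s0Y s1Y p0 p1]]] := CondP_wit z0S cd.
  have [nbL cLb] := below_L up1 ac1 H1 s1Y s0Y p0 p1.
  exists a; apply/existsP; exists b.
  rewrite -(CondP_eq (Peq nbL cLb s0Y p0)) cd andbT.
  by apply: H2 => //; exists s0.
have [s0 [s1 [s0Y s1Y p0 p1]]] := CondP_wit z0S cd.
have [nbL cLb2] := below_L up2 ac2 P0 s1Y s0Y p0 p1.
have cb0 := T21 nbL cLb2 s0Y p0.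
have cLb : connect K1 L b.
  have [cbL|//] := compar up1 cb0 (H1 s0Y).
  move: nbL; rewrite (acyc_antisym acE (rsub_connect sub1 cbL) (rsub_connect sub2 cLb2)).
  by rewrite eqxx.
exists a; apply/existsP; exists b.
rewrite (CondP_eq (Peq nbL cLb s0Y cb0)) cd andbT.
have [a' cLa' ka'b] := last_step cLb nbL.
have k2 : K2 a' b by apply: H2 => //; exists s0.
by rewrite (up2 k2 kab) in ka'b.
Qed.

End Abstract.

Section Gen.
Variable V : finType.

Lemma choicesP (B : rel V) g : g \in choices B ->
  forall v, if hyb B v then B (g v) v else g v == v.
Proof. by rewrite inE => /forallP. Qed.

Lemma kept_up (B : rel V) g : (forall v, indeg B v <= 2) -> g \in choices B ->
  uparent (kept B g).
Proof.
move=> ind gC u u' v /andP [buv nu] /andP [bu'v nu'].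
case: (eqVneq u u') => // nuu; exfalso.
have sub2 : [set u; u'] \subset [set w | B w v].
  by apply/subsetP => w; rewrite !inE => /orP [] /eqP ->.
have h2 := subset_leq_card sub2; rewrite cards2 nuu in h2.
have hv : hyb B v by rewrite /hyb eqn_leq ind h2.
move: (choicesP gC v); rewrite hv => bgv.
move: nu nu'; rewrite hv /= => ngu ngu'.
have sub3 : g v |: [set u; u'] \subset [set w | B w v].
  by rewrite subUset sub2 andbT sub1set inE.
have := subset_leq_card sub3; rewrite cardsU1 cards2 nuu !inE.
rewrite (negbTE ngu) (negbTE ngu') /= => h.
by move: (leq_trans h (ind v)).
Qed.

Lemma kept_sub (B : rel V) g : rsub (kept B g) B.
Proof. by move=> u v /andP []. Qed.

Lemma steps_cat x (A B : seq V) :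
  steps (x :: A ++ B) = steps (x :: A) ++ steps (last x A :: B).
Proof. by elim: A x => [|z A IH] x //=; rewrite /steps /= in IH *; rewrite IH. Qed.

Lemma steps_path (e : rel V) x (A : seq V) :
  all (fun p => e p.1 p.2) (steps (x :: A)) = path e x A.
Proof. by elim: A x => [|z A IH] x //=; rewrite /steps /= in IH *; rewrite IH. Qed.

Lemma acyc_path_uniq (e : rel V) x p : acyc e -> path e x p -> uniq (x :: p).
Proof.
move=> ac; elim: p x => [|z p IH] x //= /andP [exz pp].
have := IH z pp; rewrite /= => /andP [nzp up]; rewrite nzp up andbT.
rewrite inE negb_or andbT; apply/andP; split.
  by apply/eqP => exz'; move: (ac _ _ exz); rewrite -exz' connect0.
apply/negP => xp; have czx : connect e z x by apply: (path_connect pp); rewrite inE xp orbT.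
by move: (ac _ _ exz); rewrite czx.
Qed.

Lemma path_suffix (e : rel V) x p w : path e x p -> w \in p -> connect e w (last x p).
Proof.
elim: p x => [|z p IH] x //= /andP [exz pp]; rewrite inE => /orP [/eqP ->|wp].
  by apply: (path_connect pp); exact: mem_last.
exact: IH.
Qed.

Lemma first_step (e : rel V) x y : connect e x y -> y != x ->
  exists2 c, e x c & connect e c y.
Proof.
move=> /connectP [[|c p]] /=; first by move=> _ ->; rewrite eqxx.
by move=> /andP [exc pp] -> _; exists c => //; apply/connectP; exists p.
Qed.
End Gen.

Section Net.
Variables (X V : finType) (E : rel V) (lab : X -> V) (r : V).
Hypothesis N : is_rooted_network E lab r.

Lemma acE : acyc E.
Proof. by case: N. Qed.

Lemma indeg_le2 v : indeg E v <= 2.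
Proof.
case: N => _ [r0 _] [_ lf] oth _.
have [->|nvr] := eqVneq v r; first by rewrite r0.
case cv : (v \in codom lab).
  by move: (lf v); rewrite cv => /esym /andP [/eqP -> _].
by move: (oth v nvr (negbT cv)) => /orP [] /andP [/eqP -> _].
Qed.

Lemma indeg_gt0 v : v != r -> 0 < indeg E v.
Proof.
case: N => _ [r0 _] [_ lf] oth _ nvr.
case cv : (v \in codom lab).
  by move: (lf v); rewrite cv => /esym /andP [/eqP -> _].
by move: (oth v nvr (negbT cv)) => /orP [] /andP [/eqP -> _].
Qed.

Lemma hyb_sub (B : rel V) v : rsub B E -> hyb B v -> hyb E v.
Proof.
move=> sB; rewrite /hyb /indeg => /eqP h; rewrite eqn_leq indeg_le2 -{1}h.
by apply: subset_leq_card; apply/subsetP => u; rewrite !inE => /sB.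
Qed.

Lemma hyb_par (B : rel V) u v : rsub B E -> hyb B v -> E u v -> B u v.
Proof.
move=> sB hb euv.
have hE := hyb_sub sB hb.
have ss : [set w | B w v] \subset [set w | E w v].
  by apply/subsetP => w; rewrite !inE => /sB.
have eqc : #|[set w | B w v]| = #|[set w | E w v]|.
  by move: hb hE; rewrite /hyb /indeg => /eqP -> /eqP ->.
by move: (subset_cardP eqc ss u); rewrite !inE euv.
Qed.

Lemma kept_parent f v : f \in choices E -> v != r -> exists u, kept E f u v.
Proof.
move=> fC nvr; have := choicesP fC v.
case hv : (hyb E v); last first.
  move=> _; have := indeg_gt0 nvr; rewrite /indeg => /card_gt0P [u]; rewrite inE => euv.
  by exists u; rewrite /kept euv hv.
move=> efv.
  move: hv; rewrite /hyb /indeg => /eqP h.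
  have : 1 < #|[set w | E w v]| by rewrite h.
  case/card_gt1P => p1 [p2 [p1in p2in np]].
  move: p1in p2in; rewrite !inE => e1 e2.
  have [fp1|nf1] := eqVneq (f v) p1.
    exists p2; rewrite /kept e2 /hyb /indeg h /= fp1.
    done.
  by exists p1; rewrite /kept e1 /hyb /indeg h /= nf1.
Qed.

Lemma root_reach f v : f \in choices E -> connect (kept E f) r v.
Proof.
move=> fC.
have [n] := ubnP #|[set u | connect E u v]|; elim: n v => // n IH v.
rewrite ltnS => hn.
have [->|nvr] := eqVneq v r; first exact: connect0.
have [u kuv] := kept_parent fC nvr.
have euv : E u v by case/andP: kuv.
apply: connect_trans (connect1 kuv); apply: IH.
apply: leq_trans hn; apply: proper_card; apply/properP; split.
  apply/subsetP => w; rewrite !inE => cwu.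
  exact: connect_trans cwu (connect1 euv).
exists v; rewrite !inE ?connect0 //.
exact: acE euv.
Qed.


Section Edge.
Variables (f : {ffun V -> V}) (Y : {set X}) (L : V).
Hypothesis fC : f \in choices E.
Local Notation K1 := (kept E f).
Hypothesis HL : forall s, s \in Y -> connect K1 L (lab s).
Hypothesis low : forall c, c != L -> connect K1 L c ->
  exists2 t, t \in Y & ~~ connect K1 c (lab t).

Let up1 : uparent K1 := kept_up indeg_le2 fC.
Let ac1 : acyc K1 := acyc_sub acE (@kept_sub _ E f).

Lemma resE_edge u v s : v != L -> connect K1 L v -> s \in Y ->
  connect K1 v (lab s) -> K1 u v -> resE E lab r Y u v.
Proof.
move=> nvL cLv sY cvs kuv.
set s' := lab s.
have cLs : connect K1 L s' := connect_trans cLv cvs.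
have nsL : s' != L.
  apply/negP => /eqP esL; move: cvs; rewrite -/s' esL => cvL.
  by move: nvL; rewrite (acyc_antisym ac1 cvL cLv) eqxx.
have [c kLc ccs] := first_step cLs nsL.
have ncL : c != L.
  by apply/negP => /eqP ecL; move: (ac1 kLc); rewrite ecL connect0.
have [t tY nct] := low ncL (connect1 kLc).
set t' := lab t.
have cLt : connect K1 L t' := HL tY.
have meet : forall q, connect K1 L q -> q != L -> connect K1 q s' ->
    connect K1 q t' -> False.
  move=> q cLq nqL cqs cqt.
  have [ccq|cqc] := compar up1 ccs cqs.
    by move: nct; rewrite (connect_trans ccq cqt).
  have [eqc|nqc] := eqVneq q c.
    by move: nct; rewrite -eqc cqt.
  have cqL := up_step up1 cqc kLc (negbT (introF eqP (fun h => (elimN eqP nqc) (esym h)))).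
  by move: nqL; rewrite (acyc_antisym ac1 cqL cLq) eqxx.
have cLu : connect K1 L u := up_step up1 cLv kuv nvL.
pose R1 := [rel a b | K1 b a].
have acR : acyc R1.
  move=> a b /= kba; rewrite connect_rev /=; exact: ac1.
have cr1 : connect R1 s' v by rewrite connect_rev.
have cr2 : connect R1 u L by rewrite connect_rev.
case/connectP: cr1 => p1 pth1 lst1.
case/connectP: cr2 => p2 pth2 lst2.
case/connectP: cLt => pd pthd lstd.
rewrite /resE; apply/asboolP; split; first by case/andP: kuv.
pose A := p1 ++ u :: p2.
have pthA : path R1 s' A.
  by rewrite /A cat_path pth1 /= -lst1 kuv.
have lastA : last s' A = L by rewrite /A last_cat /= -lst2.
have stq : steps (s' :: A ++ pd) = steps (s' :: A) ++ steps (L :: pd).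
  by rewrite steps_cat lastA.
have St1 : all (fun p => K1 p.2 p.1) (steps (s' :: A)).
  by rewrite (steps_path R1).
have St2 : all (fun p => K1 p.1 p.2) (steps (L :: pd)).
  by rewrite steps_path.
have uLpd : uniq (L :: pd) := acyc_path_uniq ac1 pthd.
exists (s' :: A ++ pd); split; last first.
  right; rewrite stq mem_cat; apply/orP; left.
  rewrite /A steps_cat -lst1 mem_cat; apply/orP; right.
  by rewrite /steps /= inE eqxx.
split.
- rewrite -cat_cons cat_uniq (acyc_path_uniq acR pthA) /=.
  move: uLpd => /= /andP [nLpd -> ]; rewrite andbT.
  apply/hasPn => w wpd; apply/negP => wA.
  have cwL : connect K1 w s'.
    by have := path_connect pthA wA; rewrite /= connect_rev.
  have cLw : connect K1 L w by apply: (path_connect pthd); rewrite inE wpd orbT.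
  have nwL : w != L by apply/negP => /eqP ewL; move: nLpd; rewrite -ewL wpd.
  have cwt : connect K1 w t' by rewrite lstd; exact: path_suffix pthd wpd.
  by case: (meet w cLw nwL cwL cwt).
- by rewrite /= /A size_cat size_cat /= addnS.
- rewrite /= last_cat lastA -lstd; apply/andP; split; exact: imset_f.
- rewrite stq all_cat; apply/andP; split.
    apply/allP => p pin; have := allP St1 p pin => /andP [ep _]; by rewrite ep orbT.
  apply/allP => p pin; have := allP St2 p pin => /andP [ep _]; by rewrite ep.
move=> i j ij; rewrite stq size_cat => jlt; rewrite !nth_cat.
have nE : forall a b, E a b -> E b a = false.
  move=> a b eab; apply/negP => eba; move: (acE eab); by rewrite connect1.
case: (ltnP i (size (steps (s' :: A)))) => hi.
  have pin := mem_nth (r, r) hi.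
  have := allP St1 _ pin => /andP [ep _].
  by rewrite /along (nE _ _ ep).
have hj : (j < size (steps (s' :: A))) = false.
  by apply/negbTE; rewrite -leqNgt; apply: leq_trans hi (ltnW ij).
rewrite hj.
have hj2 : j - size (steps (s' :: A)) < size (steps (L :: pd)).
  by rewrite ltn_subLR // leqNgt hj.
have pin := mem_nth (r, r) hj2.
have := allP St2 _ pin => /andP [ep _].
by rewrite /against (nE _ _ ep) andbF.
Qed.
End Edge.

Lemma exists_low f (Y : {set X}) : f \in choices E ->
  exists L, (forall s, s \in Y -> connect (kept E f) L (lab s)) /\
    (forall c, c != L -> connect (kept E f) L c ->
       exists2 t, t \in Y & ~~ connect (kept E f) c (lab t)).
Proof.
move=> fC.
pose C := [pred c | [forall s in Y, connect (kept E f) c (lab s)]].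
have Cr : C r by apply/forallP => s; apply/implyP => _; exact: root_reach.
pose F := fun c => #|[set u | connect (kept E f) u c]|.
case: (@arg_maxnP _ r C F Cr) => L CL maxL.
have ac1 : acyc (kept E f) := acyc_sub acE (@kept_sub _ E f).
exists L; split.
  by move=> s sY; move/forallP: CL => /(_ s); rewrite sY.
move=> c ncL cLc; case Cc : (C c).
  have := maxL c Cc; rewrite /F => hle.
  have : #|[set u | connect (kept E f) u L]| < #|[set u | connect (kept E f) u c]|.
    apply: proper_card; apply/properP; split.
      apply/subsetP => w; rewrite !inE => cwL; exact: connect_trans cwL cLc.
    exists c; rewrite !inE ?connect0 //; apply/negP => ccL.
    by move: ncL; rewrite (acyc_antisym ac1 ccL cLc) eqxx.
  by move=> lt; move: hle => /=; rewrite leqNgt lt.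
move/negbT: Cc => /forallPn [t]; rewrite negb_imply => /andP [tY nct].
by exists t.
Qed.

Lemma resE_sub (Y : {set X}) : rsub (resE E lab r Y) E.
Proof. by move=> u v /asboolP []. Qed.

Section Fib.
Variable B : rel V.
Hypothesis sB : rsub B E.

Definition pif (f : {ffun V -> V}) : {ffun V -> V} :=
  [ffun v => if hyb B v then f v else v].

Lemma pif_choice f : f \in choices E -> pif f \in choices B.
Proof.
move=> fC; rewrite inE; apply/forallP => v; rewrite ffunE.
case hb : (hyb B v) => //.
have := choicesP fC v; rewrite (hyb_sub sB hb) => efv; exact: hyb_par.
Qed.

Definition fiber g := [set f in choices E | pif f == g].

Lemma fiber_le g1 g2 : g1 \in choices B -> g2 \in choices B ->
  #|fiber g1| <= #|fiber g2|.
Proof.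
move=> g1C g2C.
pose tau := fun f : {ffun V -> V} => [ffun v => if hyb B v then g2 v else f v].
have tinj : {in fiber g1 &, injective tau}.
  move=> f1 f2; rewrite !inE => /andP [_ /eqP p1] /andP [_ /eqP p2] e.
  apply/ffunP => v.
  have := congr1 (fun h : {ffun V -> V} => h v) e; rewrite !ffunE.
  case hb : (hyb B v) => // _.
  have := congr1 (fun h : {ffun V -> V} => h v) p1; rewrite ffunE hb => ->.
  by have := congr1 (fun h : {ffun V -> V} => h v) p2; rewrite ffunE hb => ->.
rewrite -(card_in_imset tinj); apply: subset_leq_card.
apply/subsetP => h /imsetP [f]; rewrite inE => /andP [fC /eqP pf] ->.
rewrite inE; apply/andP; split.
  rewrite inE; apply/forallP => v; rewrite ffunE.
  case hb : (hyb B v); last exact: choicesP fC v.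
  rewrite (hyb_sub sB hb); have := choicesP g2C v; rewrite hb; exact: sB.
apply/eqP/ffunP => v; rewrite !ffunE; case hb : (hyb B v) => //.
by have := choicesP g2C v; rewrite hb => /eqP ->.
Qed.

Local Open Scope ring_scope.

Lemma sum_fiber (F : {ffun V -> V} -> rat) :
  \sum_(f in choices E) F (pif f) =
  \sum_(g in choices B) #|fiber g|%:R * F g.
Proof.
rewrite (partition_big pif (fun g => g \in choices B)); last exact: pif_choice.
apply: eq_bigr => g gC.
rewrite (eq_bigr (fun _ => F g)); last by move=> f /andP [_ /eqP ->].
rewrite (eq_bigl (fun f => f \in fiber g)); last by move=> f; rewrite /fiber !inE.
by rewrite sumr_const mulr_natl.
Qed.

Lemma avg_eq (F G : {ffun V -> V} -> rat) f0 : f0 \in choices E ->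
  (forall f, f \in choices E -> G f = F (pif f)) ->
  (#|choices E|%:R)^-1 * \sum_(f in choices E) G f =
  (#|choices B|%:R)^-1 * \sum_(g in choices B) F g.
Proof.
move=> f0C hG.
set c := #|fiber (pif f0)|.
have cst : forall g, g \in choices B -> #|fiber g| = c.
  move=> g gC; apply/eqP; rewrite eqn_leq !fiber_le //; exact: pif_choice.
have hs : forall F' : {ffun V -> V} -> rat, \sum_(f in choices E) F' (pif f) =
    c%:R * \sum_(g in choices B) F' g.
  move=> F'; rewrite sum_fiber mulr_sumr; apply: eq_bigr => g gC.
  by rewrite cst.
have hmu : (#|choices E|%:R : rat) = c%:R * #|choices B|%:R.
  have := hs (fun _ => 1); rewrite !sumr_const => <-; done.
have muE0 : (#|choices E|%:R : rat) != 0.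
  rewrite pnatr_eq0 -lt0n; apply/card_gt0P; by exists f0.
have c0 : (c%:R : rat) != 0.
  by apply: contraNneq muE0 => h; rewrite hmu h mul0r.
rewrite (eq_bigr (fun f => F (pif f))) //; rewrite hs hmu invfM -mulrA.
by rewrite mulrCA mulKf.
Qed.
End Fib.

Lemma choices_nonempty : exists f0, f0 \in choices E.
Proof.
exists [ffun v => if hyb E v then odflt v [pick u | E u v] else v].
rewrite inE; apply/forallP => v; rewrite ffunE.
case hv : (hyb E v) => //.
case: pickP => [u //|none].
move: hv; rewrite /hyb /indeg => /eqP h.
have : 0 < #|[set w | E w v]| by rewrite h.
by case/card_gt0P => w; rewrite inE none.
Qed.

Lemma hs_eq (B : rel V) f x y S :
  has_split lab B f x y S = hsK lab x y S (kept B f).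
Proof. by []. Qed.

Lemma rho_eq f x y S : f \in choices E -> pairs_off x y S ->
  rho lab E f x y S =
  rho lab (resE E lab r (x |: (y |: S))) (pif (resE E lab r (x |: (y |: S))) f) x y S.
Proof.
move=> fC /and3P [/eqP c2 xS yS].
set Y := x |: (y |: S); set B := resE E lab r Y.
have sB : rsub B E by move=> u v; exact: resE_sub.
rewrite /rho !hs_eq.
have [L [HL low]] := exists_low Y fC.
have [z0 z0S] : exists z0, z0 \in S by apply/card_gt0P; rewrite c2.
rewrite (@abstract_main _ _ lab x y S Y _ _ _ E (kept E f) (kept B (pif B f)) L z0) //.
- by rewrite !inE eqxx.
- by rewrite !inE eqxx orbT.
- by apply/subsetP => w wS; rewrite !inE wS !orbT.
- exact: acE.
- exact: kept_sub.
- by move=> u v k; apply: sB; exact: (kept_sub k).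
- exact: kept_up indeg_le2 fC.
- apply: kept_up (pif_choice sB fC) => v; apply: leq_trans (indeg_le2 v).
  by apply: subset_leq_card; apply/subsetP => w; rewrite !inE; exact: sB.
move=> u v nvL cLv [s sY cvs] k1.
have bu : B u v := resE_edge fC HL low nvL cLv sY cvs k1.
rewrite /kept ffunE bu /=.
case hb : (hyb B v) => //=.
by move: k1 => /andP [_]; rewrite (hyb_sub sB hb).
Qed.

Local Open Scope ring_scope.

Lemma main_eq x y :
  dN E lab r x y = (mu E)%:R^-1 * (\sum_(f in choices E) dT E lab f x y).
Proof.
have [f0 f0C] := choices_nonempty.
have muE0 : ((mu E)%:R : rat) != 0.
  by rewrite pnatr_eq0 -lt0n; apply/card_gt0P; exists f0.
rewrite /dN /dT; have [exy|nxy] := eqVneq x y.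
  by rewrite big1 ?mulr0.
rewrite big_split /= mulrDr sumr_const.
have -> : (mu E)%:R^-1 * (((2 * #|X|)%:R - 4) *+ #|choices E|) = (2 * #|X|)%:R - 4 :> rat.
  rewrite (_ : _ *+ #|choices E| = ((2 * #|X|)%:R - 4) * (mu E)%:R); last by rewrite mulr_natr.
  by rewrite mulrCA (mulVf muE0) mulr1.
congr (_ + _).
rewrite exchange_big mulr_sumr; apply: eq_bigr => S hS.
have sB : rsub (resE E lab r (x |: (y |: S))) E by move=> u v; exact: resE_sub.
have key : rho_tilde E lab r x y S =
    (mu E)%:R^-1 * \sum_(f in choices E) rho lab E f x y S.
  rewrite /rho_tilde /mu; symmetry.
  apply: (avg_eq sB (F := fun g => rho lab (resE E lab r (x |: (y |: S))) g x y S)) f0C _.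
  by move=> f fC; exact: rho_eq.
by rewrite key -mulr_sumr mulrCA.
Qed.
End Net.

Local Open Scope ring_scope.
Theorem theorem3p3 (X V : finType) (E : rel V) (lab : X -> V) (r : V) :
  is_rooted_network E lab r -> (4 <= #|X|)%N ->
  forall x y : X,
    dN E lab r x y =
    (mu E)%:R^-1 * (\sum_(f in choices E) dT E lab f x y).
Proof. by move=> N _ x y; exact: main_eq. Qed.
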